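(* Let $G$ be a connected weighted multigraph on the vertex set $V$, $|V|=n\ge2$, with positive edge weights, weighted adjacency matrix $A$, spectral radius $\rho$ and Perron vector $p$. Let $d^{LW}(i,j)=\lim_{\alpha\to\infty}d^{W}_\alpha(i,j)$ be the long walk distance. Then for all distinct $i,j\in V$, $$d^{LW}(i,j)=n^{-1}\Bigl[(\rho I-B_{jj})^{-1}_i+(\rho I-B_{ii})^{-1}_j\Bigr]\mathbf 1,$$ where $B=P^{-1}AP$, $P=\operatorname{diag}p$, and $\mathbf 1$ is the vector of $n-1$ ones.
   Context: $A=(a_{ij})$ has $a_{ij}$ equal to the sum of weights of the edges joining $i$ and $j$ (loops, multiple edges allowed). The Perron vector $p$ is the positive eigenvector of $A$ for $\rho$ with entries summing to 1. For $\alpha>0$, $t=(\rho+\alpha^{-1})^{-1}$, $R_t=(I-tA)^{-1}=(r_{ij}(t))$, and $d^{W}_\alpha(i,j)=\theta\bigl(\tfrac12(\ln r_{ii}(t)+\ln r_{jj}(t))-\ln r_{ij}(t)\bigr)$ with $\theta=\ln(e+\alpha^{2/n})\frac{\alpha-1}{\ln\alpha}$ ($\theta=\ln(e+1)$ at $\alpha=1$); the limit defining $d^{LW}$ exists. Matrices are indexed by vertices; $M_{jj}$ is $M$ with row and column $j$ deleted; $N^{-1}_i$ is the row of $N^{-1}$ indexed by $i$. *)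

(* Defs.v *)
From HB Require Import structures.
From mathcomp Require Import all_boot all_order all_algebra.
From mathcomp Require Import all_classical all_reals all_analysis.
Set Implicit Arguments. Unset Strict Implicit. Unset Printing Implicit Defensive.
Import Order.TTheory GRing.Theory Num.Theory.
Local Open Scope ring_scope.

(* A weighted multigraph with positive weights on vertex set 'I_n is encoded by
   its weighted adjacency matrix A: a_ij = total weight of edges joining i, j. *)
Definition weighted_adjacency (R : realType) (n : nat) (A : 'M[R]_n) : Prop :=
  A^T = A /\ forall i j, 0 <= A i j.

Definition connected_graph (R : realType) (n : nat) (A : 'M[R]_n) : Prop :=
  forall i j : 'I_n, connect [rel k l | 0 < A k l] i j.

Definition spectral_radius (R : realType) (n : nat) (A : 'M[R]_n) (rho : R) : Prop :=
  eigenvalue A rho /\ forall l, eigenvalue A l -> `|l| <= rho.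

Definition perron_vector (R : realType) (n : nat) (A : 'M[R]_n) (rho : R)
  (p : 'cV[R]_n) : Prop :=
  [/\ forall i, 0 < p i 0, \sum_i p i 0 = 1 & A *m p = rho *: p].

Definition walk_dist (R : realType) (n : nat) (A : 'M[R]_n) (rho alpha : R)
  (i j : 'I_n) : R :=
  let t := (rho + alpha^-1)^-1 in
  let Rt := invmx (1%:M - t *: A) in
  let theta := if alpha == 1 then ln (expR 1 + 1)
               else ln (expR 1 + alpha `^ (2 / n%:R)) * (alpha - 1) / ln alpha in
  theta * ((ln (Rt i i) + ln (Rt j j)) / 2 - ln (Rt i j)).

(* B = P^-1 A P with P = diag p *)
Definition Bmx (R : realType) (n : nat) (A : 'M[R]_n) (p : 'cV[R]_n) : 'M[R]_n :=
  \matrix_(k, l) ((p k 0)^-1 * A k l * p l 0).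

(* M_jj : M with row and column j deleted (rows/cols indexed by V \ {j}) *)
Definition delmx (R : realType) (n : nat) (j : 'I_n) (M : 'M[R]_n) : 'M[R]_n.-1 :=
  \matrix_(k, l) M (lift j k) (lift j l).

(* N_i 1 : sum of the entries of the row of N (indexed by V \ {j}) indexed by
   the vertex i <> j *)
Definition rowsum_at (R : realType) (n : nat) (j i : 'I_n) (N : 'M[R]_n.-1) : R :=
  \sum_(a : 'I_n.-1 | lift j a == i) \sum_(b : 'I_n.-1) N a b.

(* Main.v *)
Require Import Defs.
From HB Require Import structures.
From mathcomp Require Import all_boot all_order all_algebra.
From mathcomp Require Import all_classical all_reals all_analysis.
Import Order.TTheory GRing.Theory Num.Theory.
Import numFieldNormedType.Exports.
Local Open Scope classical_set_scope.
Local Open Scope ring_scope.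
From mathcomp Require Import ring lra.

Section CvgMx.
Variable R : realType.

Lemma det_cvg {T : Type} {F : set_system T} {FF : Filter F} {m : nat} (M : T -> 'M[R]_m) (M0 : 'M[R]_m) :
  (forall i j, M x i j @[x --> F] --> M0 i j) -> \det (M x) @[x --> F] --> \det M0.
Proof.
move=> HM; rewrite /determinant.
apply: cvg_big => //; first exact: add_continuous.
move=> s _.
apply: cvgMl_tmp.
apply: cvg_big => //; first exact: mul_continuous.
Qed.

Lemma invmx_cvg {T : Type} {F : set_system T} {FF : Filter F} {m : nat} (M : T -> 'M[R]_m) (M0 : 'M[R]_m) :
  (forall i j, M x i j @[x --> F] --> M0 i j) -> M0 \in unitmx ->
  (\forall x \near F, M x \in unitmx) /\
  (forall i j, invmx (M x) i j @[x --> F] --> invmx M0 i j).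
Proof.
move=> HM U0.
have Hd : \det (M x) @[x --> F] --> \det M0 by apply: det_cvg.
have d0 : \det M0 != 0 by move: U0; rewrite unitmxE unitfE.
have Hu : \forall x \near F, M x \in unitmx.
  by apply: filterS (cvgr_neq0 _ Hd d0) => x; rewrite unitmxE unitfE.
split => // i j.
have Hc : forall a b, cofactor (M x) a b @[x --> F] --> cofactor M0 a b.
  move=> a b; rewrite /cofactor; apply: cvgMl_tmp; apply: det_cvg => k l.
  rewrite !mxE; under eq_cvg do rewrite !mxE; exact: HM.
rewrite /invmx U0 !mxE.
have H2 : (fun x => (\det (M x))^-1 * cofactor (M x) j i) @ F --> (\det M0)^-1 * cofactor M0 j i.
  by apply: cvgM; [exact: cvgV d0 Hd | exact: Hc].
have E : {near F, (fun x => (\det (M x))^-1 * cofactor (M x) j i) =1 (fun x => invmx (M x) i j)}.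
  by near=> x; rewrite /invmx ifT ?mxE //; near: x.
exact: cvg_trans (near_eq_cvg E) H2.
Unshelve. all: by end_near.
Qed.
End CvgMx.

Section An.
Variable R : realType.

Lemma ln_lower (x0 a : R) : 0 < x0 -> 0 < a -> (x0 - a) / x0 <= ln x0 - ln a.
Proof.
move=> hx ha.
have := @le_ln1Dx R (a / x0 - 1).
rewrite [1 + _]addrC subrK ln_div ?posrE // => /(_ _).
have h : -1 < a / x0 - 1 by have := divr_gt0 ha hx; lra.
move=> /(_ h) H.
have -> : (x0 - a) / x0 = - (a / x0 - 1) by field; rewrite lt0r_neq0.
by lra.
Qed.

Lemma ln_upper (x0 a : R) : 0 < x0 -> 0 < a -> ln x0 - ln a <= (x0 - a) / a.
Proof.
move=> hx ha.
have := @le_ln1Dx R (x0 / a - 1).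
rewrite [1 + _]addrC subrK ln_div ?posrE // => /(_ _).
have h : -1 < x0 / a - 1 by have := divr_gt0 hx ha; lra.
move=> /(_ h) H.
have -> : (x0 - a) / a = x0 / a - 1 by field; rewrite lt0r_neq0.
exact: H.
Qed.

Lemma ln_lim {T : Type} {F : set_system T} {FF : Filter F} (x s v : T -> R) (x0 d : R) :
  0 < x0 -> x y @[y --> F] --> x0 -> v y @[y --> F] --> d ->
  (\forall y \near F, 0 < s y /\ x0 - x y = s y * v y) ->
  (ln x0 - ln (x y)) / s y @[y --> F] --> d / x0.
Proof.
move=> hx0 cx cv hs.
have xpos : \forall y \near F, 0 < x y by apply: cvgr_gt cx _ hx0.
apply: (@squeeze_cvgr _ _ _ _ (fun y => v y / x0) (fun y => v y / x y)).
- near=> y.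
  have [sp E] : 0 < s y /\ x0 - x y = s y * v y by near: y.
  have xp : 0 < x y by near: y.
  apply/andP; split.
    have L := ln_lower _ _ hx0 xp; rewrite E in L.
    rewrite ler_pdivlMr //.
    by have -> : v y / x0 * s y = s y * v y / x0 by ring.
  have L := ln_upper _ _ hx0 xp; rewrite E in L.
  rewrite ler_pdivrMr //.
  by have -> : v y / x y * s y = s y * v y / x y by ring.
- by apply: cvgMr_tmp.
- apply: cvgM => //; exact: cvgV (lt0r_neq0 hx0) cx.
Unshelve. all: by end_near.
Qed.

Lemma inv_cvg0 : (x : R)^-1 @[x --> +oo] --> 0.
Proof.
have H := @gtr0_cvgV0 R R (+oo) _ id.
apply/H; first by near=> x; near: x; apply: nbhs_pinfty_gt; rewrite num_real.
have := @cvg_addrr R 0.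
by under eq_cvg do rewrite addr0.
Unshelve. all: by end_near.
Qed.

Lemma ln_cvgy : ln (x : R) @[x --> +oo] --> +oo.
Proof.
apply/cvgryPge => M.
near=> x.
have x1 : expR M < x by near: x; apply: nbhs_pinfty_gt; rewrite num_real.
by rewrite -ler_expR lnK ?posrE ?ltW // (lt_trans _ x1) // expR_gt0.
Unshelve. all: by end_near.
Qed.

Lemma lnratio_cvg (c : R) : 0 < c ->
  ln (expR 1 + (x : R) `^ c) / ln x @[x --> +oo] --> c.
Proof.
move=> cp.
have K : c + ln (1 + expR 1) * (ln (x : R))^-1 @[x --> +oo] --> c.
  rewrite -[X in _ --> X]addr0; apply: cvgD; first exact: cvg_cst.
  rewrite -[X in _ --> X](mulr0 (ln (1 + expR 1))); apply: cvgMl_tmp.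
  apply/gtr0_cvgV0; last exact: ln_cvgy.
  by near=> x; apply: ln_gt0; near: x; apply: nbhs_pinfty_gt; rewrite num_real.
apply: (squeeze_cvgr _ (cvg_cst c) K).
near=> x.
have x1 : 1 < x by near: x; apply: nbhs_pinfty_gt; rewrite num_real.
have x0 : 0 < x by apply: lt_trans x1.
have lx : 0 < ln x by apply: ln_gt0.
have pc : 0 < x `^ c by apply: powR_gt0.
have lpc : ln (x `^ c) = c * ln x by rewrite ln_powR.
have pc1 : 1 <= x `^ c.
  by rewrite -(lnK pc) -expR0 ler_expR lpc mulr_ge0 // ltW.
have e0 : 0 < expR (1 : R) by apply: expR_gt0.
apply/andP; split.
  rewrite ler_pdivlMr // -lpc ler_ln ?posrE // ?addr_gt0 //.
  by rewrite lerDr ltW.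
rewrite ler_pdivrMr // mulrDl -mulrA mulVf ?lt0r_neq0 // mulr1 -lpc.
rewrite -lnM ?posrE ?addr_gt0 // ler_ln ?posrE ?addr_gt0 ?mulr_gt0 //.
nra.
Unshelve. all: by end_near.
Qed.

Lemma theta_s (m : nat) (rho : R) : (0 < m)%N -> 0 < rho ->
  (if a == 1 then ln (expR 1 + 1) else ln (expR 1 + a `^ (2 / m%:R)) * (a - 1) / ln a)
    * (rho^-1 - (rho + a^-1)^-1) @[a --> +oo] --> 2 / m%:R / rho ^+ 2.
Proof.
move=> mp rp.
have cp : 0 < 2 / m%:R :> R by rewrite divr_gt0 // ltr0n.
have L2 : (1 - a^-1) / (rho * (rho + a^-1)) @[a --> +oo] --> (1 - 0) / (rho * (rho + 0)).
  apply: cvgM; first by apply: cvgB; [exact: cvg_cst | exact: inv_cvg0].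
  apply: cvgV; first by rewrite addr0 mulf_neq0 // lt0r_neq0.
  apply: cvgMl_tmp; apply: cvgD; [exact: cvg_cst | exact: inv_cvg0].
have L := cvgM (lnratio_cvg _ cp) L2.
have -> : 2 / m%:R / rho ^+ 2 = 2 / m%:R * ((1 - 0) / (rho * (rho + 0))).
  by rewrite subr0 addr0 expr2 mul1r.
suff E : {near +oo, ((fun x : R => ln (expR 1 + x `^ (2 / m%:R)) / ln x) \*
   (fun a : R => (1 - a^-1) / (rho * (rho + a^-1)))) =1
   (fun a : R => (if a == 1 then ln (expR 1 + 1) else ln (expR 1 + a `^ (2 / m%:R)) * (a - 1) / ln a)
    * (rho^-1 - (rho + a^-1)^-1))}.
  exact: cvg_trans (near_eq_cvg E) (L _).
near=> a.
have a1 : 1 < a by near: a; apply: nbhs_pinfty_gt; rewrite num_real.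
have a0 : a != 0 by rewrite gt_eqF // (lt_trans _ a1).
have la : ln a != 0 by rewrite gt_eqF // ln_gt0.
have r0 : rho != 0 by rewrite gt_eqF.
have ra : rho * a + 1 != 0 by rewrite gt_eqF // addr_gt0 // mulr_gt0 // (lt_trans _ a1).
rewrite /= (gt_eqF a1).
have e1 : rho + a^-1 = (rho * a + 1) / a by field.
rewrite e1; field.
by rewrite a0 ra r0 la.
Unshelve. all: by end_near.
Qed.
End An.

Section Alg.
Variable R : realType.
Variable n : nat.
Variables (A : 'M[R]_n) (rho : R) (p : 'cV[R]_n).
Hypothesis hn : (1 < n)%N.
Hypothesis hA : weighted_adjacency A.
Hypothesis hC : connected_graph A.
Hypothesis hS : spectral_radius A rho.
Hypothesis hP : perron_vector A rho p.

Lemma Asym k l : A k l = A l k.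
Proof. by case: hA => /matrixP /(_ l k); rewrite mxE. Qed.
Lemma Age0 k l : 0 <= A k l.
Proof. by case: hA. Qed.
Lemma p_gt0 k : 0 < p k 0.
Proof. by case: hP. Qed.
Lemma Ap k : \sum_l A k l * p l 0 = rho * p k 0.
Proof.
by case: hP => _ _ /matrixP /(_ k 0); rewrite !mxE => <-.
Qed.

Lemma edge_exists : exists k l, 0 < A k l.
Proof.
have h0 : (0 < n)%N by apply: ltn_trans hn.
pose u : 'I_n := Ordinal h0. pose w : 'I_n := Ordinal hn.
have /connectP [s Hs Hl] := hC u w.
case: s Hs Hl => [|z s] /=.
  by move=> _ /(congr1 val).
by move=> /andP [Huz _] _; exists u, z.
Qed.

Lemma rho_gt0 : 0 < rho.
Proof.
have [k [l Hkl]] := edge_exists.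
have H : 0 < \sum_l A k l * p l 0.
  rewrite (bigD1 l) //=; apply: ltr_pwDl; first by rewrite mulr_gt0 // p_gt0.
  by apply: sumr_ge0 => i _; rewrite mulr_ge0 // ?Age0 // ltW // p_gt0.
by move: H; rewrite Ap pmulr_lgt0 // p_gt0.
Qed.

Lemma unit_IA (t : R) : 0 < t -> t < rho^-1 -> (1%:M - t *: A) \in unitmx.
Proof.
move=> t0 tlt; rewrite unitmxE unitfE; apply/negP => /det0P [v vn0 vA].
have : eigenvalue A t^-1.
  apply/eigenvalueP; exists v => //.
  move/eqP: vA; rewrite mulmxBr mulmx1 subr_eq0 => /eqP vE.
  rewrite -scalemxAr in vE.
  by rewrite {2}vE scalerA mulVf ?scale1r // gt_eqF.
case: hS => _ /[apply].
rewrite gtr0_norm ?invr_gt0 //.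
move: tlt; rewrite -(ltf_pV2 ) ?posrE ?invr_gt0 ?rho_gt0 // invrK.
by move=> /lt_geF ->.
Qed.

Definition avec (j : 'I_n) : 'cV[R]_n.-1 := \col_k A (lift j k) j.
Definition qv (j : 'I_n) : 'cV[R]_n.-1 := \col_k p (lift j k) 0.

Lemma sum_split (j : 'I_n) (F : 'I_n -> R) :
  \sum_l F l = F j + \sum_(k < n.-1) F (lift j k).
Proof. by rewrite (bigD1_ord j) //. Qed.

Lemma Aq j k : \sum_l delmx j A k l * qv j l 0 = rho * qv j k 0 - avec j k 0 * p j 0.
Proof.
rewrite !mxE -Ap (sum_split j) addrC addKr.
by apply: eq_bigr => l _; rewrite !mxE.
Qed.

Lemma unit_IAjj j : (1%:M - rho^-1 *: delmx j A) \in unitmx.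
Proof.
have rp := rho_gt0.
rewrite unitmxE unitfE; apply/negP => /det0P [v vn0 vA].
set A' := delmx j A in vA.
have vE : v *m A' = rho *: v.
  move/eqP: vA; rewrite mulmxBr mulmx1 subr_eq0 => /eqP vE.
  rewrite -scalemxAr in vE.
  by rewrite {2}vE scalerA mulfV ?scale1r // gt_eqF.
pose w (k : 'I_n.-1) : R := `|v 0 k|.
have w_ge0 k : 0 <= w k by rewrite /w normr_ge0.
have A'ge0 k l : 0 <= A' k l by rewrite mxE Age0.
have wA (l : 'I_n.-1) : rho * w l <= \sum_k w k * A' k l.
  have /matrixP/(_ 0 l) := vE; rewrite !mxE => E.
  rewrite /w -(gtr0_norm rp) -normrM -E.
  apply: le_trans (ler_norm_sum _ _ _) _.
  by apply: ler_sum => k _; rewrite normrM (ger0_norm (A'ge0 k l)).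
have key : \sum_l (\sum_k w k * A' k l - rho * w l) * qv j l 0
           = - (p j 0 * \sum_k w k * avec j k 0).
  rewrite (eq_bigr (fun l => \sum_k w k * A' k l * qv j l 0 - rho * w l * qv j l 0)); last first.
    by move=> l _; rewrite mulrBl big_distrl.
  rewrite sumrB exchange_big /=.
  rewrite (eq_bigr (fun k => w k * (rho * qv j k 0) - w k * (avec j k 0 * p j 0))); last first.
    move=> k _; rewrite -mulrBr -Aq big_distrr /=; apply: eq_bigr => l _; by rewrite mulrA.
  rewrite sumrB addrAC.
  have -> : \sum_k w k * (rho * qv j k 0) = \sum_l rho * w l * qv j l 0.
    by apply: eq_bigr => k _; rewrite mulrA (mulrC (w k)) -mulrA mulrA.
  rewrite subrr add0r; congr (- _); rewrite big_distrr /=.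
  by apply: eq_bigr => k _; rewrite [RHS]mulrCA (mulrC (p j 0)).
have qp k : 0 < qv j k 0 by rewrite mxE p_gt0.
have Hl : 0 <= \sum_l (\sum_k w k * A' k l - rho * w l) * qv j l 0.
  apply: sumr_ge0 => l _; apply: mulr_ge0; last exact: ltW.
  by rewrite subr_ge0.
have Hr : 0 <= p j 0 * \sum_k w k * avec j k 0.
  apply: mulr_ge0; first exact: ltW (p_gt0 j).
  by apply: sumr_ge0 => k _; rewrite mulr_ge0 // mxE Age0.
have Hs0 : p j 0 * \sum_k w k * avec j k 0 = 0.
  by apply/eqP; rewrite eq_le Hr andbT -oppr_ge0 -key Hl.
have Hs : \sum_k w k * avec j k 0 = 0.
  by move/eqP: Hs0; rewrite mulf_eq0 gt_eqF ?p_gt0 //= => /eqP.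
have HL0 : \sum_l (\sum_k w k * A' k l - rho * w l) * qv j l 0 = 0.
  by rewrite key Hs0 oppr0.
have wa k : w k * avec j k 0 = 0.
  apply: (psumr_eq0P _ Hs) => // i _; by rewrite mulr_ge0 // mxE Age0.
have wAl l : \sum_k w k * A' k l = rho * w l.
  have nn : forall i : 'I_n.-1, true -> 0 <= (\sum_k w k * A' k i - rho * w i) * qv j i 0.
    by move=> i _; apply: mulr_ge0; [rewrite subr_ge0 | exact: ltW].
  have /eqP := psumr_eq0P nn HL0 (i:=l) isT.
  by rewrite mulf_eq0 (gt_eqF (qp l)) orbF subr_eq0 => /eqP.
pose S u := if unlift j u is Some k then w k == 0 else true.
have stepS x y : 0 < A x y -> S x -> S y.
  rewrite /S.
  case: (unliftP j y) => [k' ->|->]; last by [].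
  case: (unliftP j x) => [k ->|->].
    move=> Axy /eqP wk.
    have := wAl k; rewrite wk mulr0 => H0.
    have /eqP := psumr_eq0P (fun i _ => mulr_ge0 (w_ge0 i) (A'ge0 i k)) H0 (i:=k') isT.
    by rewrite mulf_eq0 /A' mxE Asym (gt_eqF Axy) orbF.
  move=> Ajy _.
  by have /eqP := wa k'; rewrite mulf_eq0 mxE Asym (gt_eqF Ajy) orbF.
have clS : closed_mem [rel k l | 0 < A k l] (mem [pred u | S u]).
  move=> x y /= Axy; rewrite !inE; apply/idP/idP; first exact: stepS.
  by apply: stepS; rewrite Asym.
have Sall u : S u.
  have := closed_connect clS (hC j u).
  by rewrite !inE /S unlift_none => <-.
apply/negP: vn0; rewrite negbK; apply/eqP/rowP => k.
have := Sall (lift j k); rewrite /S liftK /w mxE => /eqP. by move/normr0_eq0.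
Qed.


Lemma IA_entry m (M : 'M[R]_m) t k l : (1%:M - t *: M) k l = (k == l)%:R - t * M k l.
Proof. by rewrite !mxE. Qed.

Lemma col_rel j t (k : 'I_n.-1) : (1%:M - t *: A) \in unitmx ->
  (1%:M - t *: delmx j A) \in unitmx ->
  invmx (1%:M - t *: A) (lift j k) j =
  (t *: (invmx (1%:M - t *: delmx j A) *m avec j)) k 0 * invmx (1%:M - t *: A) j j.
Proof.
move=> U U'.
set Rm := invmx (1%:M - t *: A).
set M' := 1%:M - t *: delmx j A.
pose r : 'cV[R]_n.-1 := \col_b Rm (lift j b) j.
have Hr : M' *m r = (t * Rm j j) *: avec j.
  apply/matrixP => a b; rewrite (ord1 b) !mxE.
  have /matrixP /(_ (lift j a) j) := mulmxV U.
  rewrite !mxE (sum_split j) eq_sym (negbTE (neq_lift j a)) mulr0n.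
  rewrite !mxE eq_sym (negbTE (neq_lift j a)) /= sub0r => /eqP.
  rewrite mulNr addrC addr_eq0 opprK => /eqP E. rewrite mulrAC -E.
  apply: eq_bigr => b' _; rewrite !mxE (inj_eq (lift_inj (h:=j))).
  by [].
have E3 : r = (t * Rm j j) *: (invmx M' *m avec j) by rewrite scalemxAr -Hr mulKmx.
have /matrixP /(_ k 0) := E3.
rewrite [in LHS]mxE [in RHS]mxE => ->.
by rewrite [in RHS]mxE mulrAC.
Qed.

Lemma Rjj_ge1 j (t : R) : 0 < t -> t < rho^-1 ->
  (forall k, 0 <= invmx (1%:M - t *: A) k j) /\ 1 <= invmx (1%:M - t *: A) j j.
Proof.
move=> t0 tlt.
have U := unit_IA t t0 tlt.
set Rm := invmx (1%:M - t *: A).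
have E : Rm - t *: (A *m Rm) = 1%:M.
  by rewrite -(mulmxV U) mulmxBl mul1mx -scalemxAl.
have Ex k : Rm k j = (k == j)%:R + t * \sum_l A k l * Rm l j.
  have /matrixP /(_ k j) := E; rewrite !mxE => <-.
  by rewrite subrK.
have rp := rho_gt0.
have trho : t * rho < 1 by rewrite -(mulVf (lt0r_neq0 rp)) ltr_pM2r.
pose k0 := [arg min_(k < j) (Rm k j / p k 0)]%O.
have [k1 _ Hmin] : extremum_spec <=%O predT (fun k => Rm k j / p k 0) k0.
  exact: arg_minP.
set mu := Rm k1 j / p k1 0 in Hmin.
have xge k : mu * p k 0 <= Rm k j.
  by rewrite -ler_pdivlMr ?p_gt0 //; exact: Hmin.
have h2 : Rm k1 j = mu * p k1 0 by rewrite /mu divfK // gt_eqF // p_gt0.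
clearbody mu.
have mu_ge0 : 0 <= mu.
  have h1 : t * mu * rho * p k1 0 <= Rm k1 j.
    rewrite Ex; apply: ler_wpDl; first by rewrite ler0n.
    rewrite -!mulrA ler_pM2l // -Ap big_distrr /=.
    apply: ler_sum => l _; rewrite mulrA (mulrC mu) -mulrA.
    by apply: ler_wpM2l; [exact: Age0 | exact: xge].
  rewrite h2 -mulrA (mulrC rho) mulrA in h1.
  have h3 : 0 <= mu * p k1 0 * (1 - t * rho).
    rewrite mulrBr mulr1 subr_ge0.
    by have -> : mu * p k1 0 * (t * rho) = t * mu * p k1 0 * rho by ring.
  by move: h3; rewrite pmulr_lge0 ?subr_gt0 // pmulr_lge0 // p_gt0.
have xnn k : 0 <= Rm k j by apply: le_trans (xge k); rewrite mulr_ge0 // ltW // p_gt0.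
split => //.
rewrite Ex eqxx; apply: ler_wpDr => //.
apply: mulr_ge0; first exact: ltW.
by apply: sumr_ge0 => l _; rewrite mulr_ge0 // Age0.
Qed.

Definition Nt j (t : R) := invmx (1%:M - t *: delmx j A).
Definition gfun j (t : R) := t *: (Nt j t *m avec j).

Lemma M0q j : (1%:M - rho^-1 *: delmx j A) *m qv j = (rho^-1 * p j 0) *: avec j.
Proof.
have rp := rho_gt0.
apply/matrixP => k b; rewrite (ord1 b) mulmxBl mul1mx -scalemxAl !mxE.
have := Aq j k; rewrite !mxE => ->.
rewrite mulrBr mulrA mulVf ?lt0r_neq0 // mul1r.
by rewrite opprB addrC subrK mulrCA mulrC.
Qed.

Lemma N0a j : Nt j rho^-1 *m avec j = (rho / p j 0) *: qv j.
Proof.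
have rp := rho_gt0.
have pj := p_gt0 j.
have U := unit_IAjj j.
have E : qv j = (rho^-1 * p j 0) *: (Nt j rho^-1 *m avec j).
  by rewrite scalemxAr -M0q mulKmx.
rewrite E scalerA mulrACA mulfV ?lt0r_neq0 // mulVf ?lt0r_neq0 //.
by rewrite mul1r scale1r.
Qed.

Lemma g0E j : gfun j rho^-1 = (p j 0)^-1 *: qv j.
Proof.
have rp := rho_gt0.
by rewrite /gfun N0a scalerA mulrA mulVf ?lt0r_neq0 // mul1r.
Qed.

Lemma g_diff j t : (1%:M - t *: delmx j A) \in unitmx ->
  gfun j t - gfun j rho^-1 =
  (t - rho^-1) *: (Nt j rho^-1 *m avec j + t *: (Nt j t *m (delmx j A *m (Nt j rho^-1 *m avec j)))).
Proof.
move=> Ut.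
have U0 := unit_IAjj j.
set A' := delmx j A in Ut U0 *.
set N := Nt j t; set N0 := Nt j rho^-1; set a := avec j.
have HN : N - N0 = (t - rho^-1) *: (N *m A' *m N0).
  have e1 : N = N *m (1%:M - rho^-1 *: A') *m N0.
    by rewrite -mulmxA mulmxV // mulmx1.
  have e2 : N0 = N *m (1%:M - t *: A') *m N0.
    by rewrite mulVmx // mul1mx.
  transitivity (N *m (1%:M - rho^-1 *: A') *m N0 - N *m (1%:M - t *: A') *m N0).
    by rewrite -e1 -e2.
  rewrite -mulmxBl -mulmxBr.
  have -> : (1%:M - rho^-1 *: A') - (1%:M - t *: A') = (t - rho^-1) *: A'.
    by rewrite opprB addrC addrA subrK -scalerBl.
  by rewrite -scalemxAr -scalemxAl.
rewrite /gfun -/N -/N0 -/a.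
have -> : t *: (N *m a) = t *: (N0 *m a) + t *: ((N - N0) *m a).
  by rewrite mulmxBl scalerBr addrC subrK.
rewrite HN -scalemxAl scalerA addrAC -scalerBl scalerDr scalerA (mulrC t) -scalerA.
by rewrite scalerA -!mulmxA.
Qed.

Lemma N0N0a j : Nt j rho^-1 *m avec j + rho^-1 *: (Nt j rho^-1 *m (delmx j A *m (Nt j rho^-1 *m avec j)))
  = Nt j rho^-1 *m (Nt j rho^-1 *m avec j).
Proof.
have U0 := unit_IAjj j.
set N0 := Nt j rho^-1; set x := N0 *m avec j.
have hx : avec j = (1%:M - rho^-1 *: delmx j A) *m x by rewrite /x /N0 mulKVmx.
rewrite {1}/x {1}hx scalemxAr -mulmxDr; congr (_ *m _).
by rewrite mulmxBl mul1mx -scalemxAl subrK.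
Qed.

Lemma NNa_Y j k : (Nt j rho^-1 *m (Nt j rho^-1 *m avec j)) k 0 =
  rho ^+ 2 / p j 0 * qv j k 0 * \sum_b (invmx (rho%:M - delmx j (Bmx A p))) k b.
Proof.
have rp := rho_gt0.
have U0 := unit_IAjj j.
set A' := delmx j A in U0 *.
set C := rho%:M - delmx j (Bmx A p).
set N0 := Nt j rho^-1.
pose D : 'M[R]_n.-1 := diag_mx (qv j)^T.
have qp k' : 0 < qv j k' 0 by rewrite mxE p_gt0.
have HD : (1%:M - rho^-1 *: A') *m D = rho^-1 *: (D *m C).
  apply/matrixP => a b; rewrite mul_mx_diag mul_diag_mx !mxE.
  have r0 : rho != 0 by rewrite lt0r_neq0.
  have p0 : p (lift j b) 0 != 0 by rewrite lt0r_neq0 ?p_gt0.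
  have p0' : p (lift j a) 0 != 0 by rewrite lt0r_neq0 ?p_gt0.
  case: (eqVneq a b) => [->|nab] /=.
    by rewrite ?eqxx !mulr1n; field; rewrite p0 r0.
  by rewrite !mulr0n; field; rewrite ?p0 ?p0' ?r0.
have UD : D \in unitmx.
  rewrite unitmxE det_diag unitfE; apply/prodf_neq0 => i _.
  by rewrite mxE lt0r_neq0.
have UC : C \in unitmx.
  have : rho^-1 *: (D *m C) \in unitmx by rewrite -HD unitmx_mul U0 UD.
  by rewrite unitmxZ ?unitfE ?invr_eq0 ?lt0r_neq0 // unitmx_mul UD.
have HND : N0 *m D = rho *: (D *m invmx C).
  have : N0 *m ((1%:M - rho^-1 *: A') *m D) *m invmx C = D *m invmx C.
    by rewrite mulmxA mulVmx // mul1mx.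
  rewrite HD -scalemxAr -scalemxAl -!mulmxA mulmxV // mulmx1 => <-.
  by rewrite scalerA mulfV ?lt0r_neq0 // scale1r.
have Hq : qv j = D *m const_mx 1.
  by apply/matrixP => a b; rewrite mul_diag_mx !mxE mulr1.
rewrite N0a -scalemxAr.
have -> : N0 *m qv j = rho *: (D *m (invmx C *m const_mx 1)).
  by rewrite {1}Hq mulmxA HND -scalemxAl mulmxA.
rewrite scalerA mxE mul_diag_mx !mxE.
have pj : p j 0 != 0 by rewrite lt0r_neq0 ?p_gt0.
set S := \sum_b _.
have -> : S = \sum_b invmx C k b by apply: eq_bigr => b _; rewrite mxE mulr1.
rewrite expr2; field.
by rewrite pj.
Qed.

Lemma mulmx_cvg {T : Type} {F : set_system T} {FF : Filter F} {m k l : nat}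
  (X : T -> 'M[R]_(m, k)) (X0 : 'M[R]_(m, k)) (C : 'M[R]_(k, l)) :
  (forall i j, X x i j @[x --> F] --> X0 i j) ->
  forall i j, (X x *m C) i j @[x --> F] --> (X0 *m C) i j.
Proof.
move=> HX i j; rewrite mxE; under eq_cvg do rewrite mxE.
apply: cvg_big => //; first exact: add_continuous.
by move=> b _; apply: cvgMr_tmp.
Qed.

Lemma rowsum_lift (j : 'I_n) (k : 'I_n.-1) (N : 'M[R]_n.-1) :
  rowsum_at j (lift j k) N = \sum_b N k b.
Proof.
rewrite /rowsum_at (eq_bigl (pred1 k)); first by rewrite big_pred1_eq.
by move=> a /=; rewrite (inj_eq lift_inj).
Qed.

Lemma R_sym (t : R) k l : invmx (1%:M - t *: A) k l = invmx (1%:M - t *: A) l k.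
Proof.
have E : (1%:M - t *: A)^T = 1%:M - t *: A.
  by rewrite linearB /= linearZ /= trmx1; case: hA => ->.
by rewrite -{1}E -trmx_inv mxE.
Qed.

Definition tf (a : R) := (rho + a^-1)^-1.
Definition sf (a : R) := rho^-1 - tf a.

Lemma tf_cvg : tf a @[a --> +oo] --> rho^-1.
Proof.
have rp := rho_gt0.
apply: cvgV; first by rewrite lt0r_neq0.
rewrite -[X in _ --> X]addr0; apply: cvgD; [exact: cvg_cst | exact: inv_cvg0].
Qed.

Lemma tf_near : \forall a \near +oo, 0 < tf a /\ tf a < rho^-1.
Proof.
have rp := rho_gt0.
near=> a.
have a0 : 0 < a by near: a; apply: nbhs_pinfty_gt; rewrite num_real.
rewrite /tf invr_gt0 addr_gt0 ?invr_gt0 //; split => //.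
by rewrite ltf_pV2 ?posrE ?addr_gt0 ?invr_gt0 // ltrDl invr_gt0.
Unshelve. all: by end_near.
Qed.

Lemma g_facts (j : 'I_n) (k : 'I_n.-1) :
  (\forall a \near +oo, (1%:M - tf a *: delmx j A) \in unitmx) /\
  exists v : R -> R, v a @[a --> +oo] --> (Nt j rho^-1 *m (Nt j rho^-1 *m avec j)) k 0 /\
   \forall a \near +oo, gfun j rho^-1 k 0 - gfun j (tf a) k 0 = sf a * v a.
Proof.
have rp := rho_gt0.
have U0 := unit_IAjj j.
have HM : forall i l, (1%:M - tf x *: delmx j A) i l @[x --> +oo] -->
                       (1%:M - rho^-1 *: delmx j A) i l.
  move=> i l; rewrite IA_entry; under eq_cvg do rewrite IA_entry.
  apply: cvgB; first exact: cvg_cst.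
  by apply: cvgMr_tmp; exact: tf_cvg.
have [Hu HN] := @invmx_cvg R _ _ _ _ _ _ HM U0.
split => //.
set c := delmx j A *m (Nt j rho^-1 *m avec j).
exists (fun a => (Nt j rho^-1 *m avec j + tf a *: (Nt j (tf a) *m c)) k 0).
split.
  rewrite -N0N0a mxE; under eq_cvg do rewrite mxE.
  apply: cvgD; first exact: cvg_cst.
  rewrite mxE; under eq_cvg do rewrite mxE.
  apply: cvgM; first exact: tf_cvg.
  by apply: mulmx_cvg.
near=> a.
have Ua : (1%:M - tf a *: delmx j A) \in unitmx by near: a.
have := g_diff j (tf a) Ua.
move=> /matrixP /(_ k 0); rewrite !mxE => E.
rewrite /sf -[rho^-1 - tf a]opprB mulNr -E; ring.
Unshelve. all: by end_near.
Qed.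

Lemma g_cvg_from (x : R -> R) (x0 d : R) (v : R -> R) :
  v a @[a --> +oo] --> d -> (\forall a \near +oo, x0 - x a = sf a * v a) ->
  x a @[a --> +oo] --> x0.
Proof.
move=> cv E.
have sf0 : sf a @[a --> +oo] --> 0.
  rewrite -(subrr rho^-1); apply: cvgB; [exact: cvg_cst | exact: tf_cvg].
have L : x0 - sf a * v a @[a --> +oo] --> x0 - 0 * d.
  by apply: cvgB; [exact: cvg_cst | exact: cvgM].
rewrite mul0r subr0 in L.
have E' : {near +oo, (fun a => x0 - sf a * v a) =1 x}.
  near=> a; have h : x0 - x a = sf a * v a by near: a.
  by rewrite /= -h; ring.
exact: cvg_trans (near_eq_cvg E') L.
Unshelve. all: by end_near.
Qed.

Lemma main_sec (i j : 'I_n) : i != j ->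
  walk_dist A rho alpha i j @[alpha --> +oo] -->
    n%:R^-1 * (rowsum_at j i (invmx (rho%:M - delmx j (Bmx A p)))
             + rowsum_at i j (invmx (rho%:M - delmx i (Bmx A p)))).
Proof.
move=> nij.
have rp := rho_gt0.
case: (unliftP j i) => [i' Ei|Eij]; last by rewrite Eij eqxx in nij.
case: (unliftP i j) => [j' Ej|Eji]; last by rewrite Eji eqxx in nij.
have [Hu1 [v1 [cv1 Hv1]]] := g_facts j i'.
have [Hu2 [v2 [cv2 Hv2]]] := g_facts i j'.
set g01 := gfun j rho^-1 i' 0.
set g02 := gfun i rho^-1 j' 0.
have g01E : g01 = p i 0 / p j 0 by rewrite /g01 g0E !mxE -Ei mulrC.
have g02E : g02 = p j 0 / p i 0 by rewrite /g02 g0E !mxE -Ej mulrC.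
have g01p : 0 < g01 by rewrite g01E divr_gt0 ?p_gt0.
have g02p : 0 < g02 by rewrite g02E divr_gt0 ?p_gt0.
have sfp : \forall a \near +oo, 0 < sf a.
  by apply: filterS tf_near => a [_ h]; rewrite /sf subr_gt0.
have cg1 := g_cvg_from _ _ _ _ cv1 Hv1.
have cg2 := g_cvg_from _ _ _ _ cv2 Hv2.
have H1 : \forall a \near +oo, 0 < sf a /\ g01 - gfun j (tf a) i' 0 = sf a * v1 a.
  by near=> a; split; near: a.
have H2 : \forall a \near +oo, 0 < sf a /\ g02 - gfun i (tf a) j' 0 = sf a * v2 a.
  by near=> a; split; near: a.
have L1 := @ln_lim R _ _ _ _ sf v1 _ _ g01p cg1 cv1 H1.
have L2 := @ln_lim R _ _ _ _ sf v2 _ _ g02p cg2 cv2 H2.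
have T := @theta_s R n rho (ltn_trans (ltn0Sn 0) hn) rp.
have LD : 2^-1 * ((ln g01 - ln (gfun j (tf y) i' 0)) / sf y + (ln g02 - ln (gfun i (tf y) j' 0)) / sf y)
    @[y --> +oo] --> 2^-1 * ((Nt j rho^-1 *m (Nt j rho^-1 *m avec j)) i' 0 / g01
                           + (Nt i rho^-1 *m (Nt i rho^-1 *m avec i)) j' 0 / g02).
  by apply: cvgMl_tmp; apply: cvgD; [exact: L1 | exact: L2].
have LL := cvgM T LD.
set Y1 := invmx (rho%:M - delmx j (Bmx A p)).
set Y2 := invmx (rho%:M - delmx i (Bmx A p)).
have RS1 : rowsum_at j i Y1 = \sum_b Y1 i' b by rewrite Ei rowsum_lift.
have RS2 : rowsum_at i j Y2 = \sum_b Y2 j' b by rewrite Ej rowsum_lift.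
have VE : 2 / n%:R / rho ^+ 2 * (2^-1 * ((Nt j rho^-1 *m (Nt j rho^-1 *m avec j)) i' 0 / g01
                           + (Nt i rho^-1 *m (Nt i rho^-1 *m avec i)) j' 0 / g02))
         = n%:R^-1 * (rowsum_at j i Y1 + rowsum_at i j Y2).
  rewrite RS1 RS2 !NNa_Y g01E g02E !mxE -Ei -Ej -/Y1 -/Y2.
  have pi0 : p i 0 != 0 by rewrite lt0r_neq0 ?p_gt0.
  have pj0 : p j 0 != 0 by rewrite lt0r_neq0 ?p_gt0.
  have r0 : rho != 0 by rewrite lt0r_neq0.
  have n0 : n%:R != 0 :> R by rewrite pnatr_eq0 -lt0n (ltn_trans _ hn).
  by field; rewrite ?pi0 ?pj0 ?r0 ?n0.
rewrite VE in LL.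
refine (cvg_trans (near_eq_cvg _) (LL _)).
near=> a.
have [t0 tlt] : 0 < tf a /\ tf a < rho^-1 by near: a; exact: tf_near.
have U := unit_IA (tf a) t0 tlt.
have U1 : (1%:M - tf a *: delmx j A) \in unitmx by near: a.
have U2 : (1%:M - tf a *: delmx i A) \in unitmx by near: a.
have [_ Rjj1] := Rjj_ge1 j (tf a) t0 tlt.
have [_ Rii1] := Rjj_ge1 i (tf a) t0 tlt.
have g1p : 0 < gfun j (tf a) i' 0 by near: a; apply: cvgr_gt cg1 _ g01p.
have g2p : 0 < gfun i (tf a) j' 0 by near: a; apply: cvgr_gt cg2 _ g02p.
have sp : 0 < sf a by near: a.
set Rm := invmx (1%:M - tf a *: A).
have C1 : Rm i j = gfun j (tf a) i' 0 * Rm j j.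
  by rewrite {1}Ei; exact: col_rel j (tf a) i' U U1.
have C2 : Rm j i = gfun i (tf a) j' 0 * Rm i i.
  by rewrite {1}Ej; exact: col_rel i (tf a) j' U U2.
have Sy : Rm i j = Rm j i by apply: R_sym.
have Rjp : 0 < Rm j j by apply: lt_le_trans Rjj1.
have Rip : 0 < Rm i i by apply: lt_le_trans Rii1.
have e1 : ln (Rm i j) = ln (gfun j (tf a) i' 0) + ln (Rm j j) by rewrite C1 lnM.
have e2 : ln (Rm i j) = ln (gfun i (tf a) j' 0) + ln (Rm i i) by rewrite Sy C2 lnM.
have e3 : ln g01 + ln g02 = 0.
  rewrite -lnM ?posrE // g01E g02E.
  have pi0 : p i 0 != 0 by rewrite lt0r_neq0 ?p_gt0.
  have pj0 : p j 0 != 0 by rewrite lt0r_neq0 ?p_gt0.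
  have -> : p i 0 / p j 0 * (p j 0 / p i 0) = 1 by field; rewrite pi0 pj0.
  exact: ln1.
rewrite /walk_dist /=.
rewrite -/(tf a) -/Rm -/(sf a).
set th := (if a == 1 then _ else _).
have h : (ln (Rm i i) + ln (Rm j j)) / 2 - ln (Rm i j) =
   2^-1 * ((ln g01 - ln (gfun j (tf a) i' 0)) + (ln g02 - ln (gfun i (tf a) j' 0))).
  by lra.
rewrite h; field.
by rewrite lt0r_neq0.
Unshelve. all: by end_near.
Qed.
End Alg.

Theorem corollary2 (R : realType) (n : nat) (A : 'M[R]_n) (rho : R) (p : 'cV[R]_n) :
  (1 < n)%N ->
  weighted_adjacency A -> connected_graph A ->
  spectral_radius A rho -> perron_vector A rho p ->
  forall i j : 'I_n, i != j ->
  walk_dist A rho alpha i j @[alpha --> +oo] -->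
    n%:R^-1 * (rowsum_at j i (invmx (rho%:M - delmx j (Bmx A p)))
             + rowsum_at i j (invmx (rho%:M - delmx i (Bmx A p)))).
Proof.
move=> hn hA hC hS hP i j nij.
exact: main_sec.
Qed.
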